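(* Let $q\ge2$, $n\ge1$, $X=\{0,1,\ldots,q-1\}$, and consider the Insect Markov chain on $X^n$ (defined below). Let $\mathcal{L}=\{L_1,\ldots,L_k\}$ be a partition of $X^n$ with respect to which this chain is lumpable. Let $x_0,y_0\in L_r$ for some $r$, and for $i=0,\ldots,n$ and $s=1,\ldots,k$ put $\lambda_{i,s}=|\{x\in X^n: d(x_0,x)=i,\ x\in L_s\}|$ and $\mu_{i,s}=|\{y\in X^n: d(y_0,y)=i,\ y\in L_s\}|$. Then $\lambda_{i,s}=\mu_{i,s}$ for every $i=0,\ldots,n$ and $s=1,\ldots,k$.
   Context: For $x,y\in X^n$, $d(x,y)=n-\max\{m\in\{0,\ldots,n\}: x_1\cdots x_m=y_1\cdots y_m\}$ (the ultrametric on the boundary of the rooted $q$-ary tree of depth $n$). Set $\alpha_j=\frac{q^j-1}{q^{j+1}-1}$ for $1\le j\le n-1$ and $\alpha_n=0$. The Insect Markov chain on $X^n$ has transition probabilities depending only on $d(x,y)$: if $d(x,y)\in\{0,1\}$, $p(x,y)=q^{-1}(1-\alpha_1)+\sum_{i=2}^nq^{-i}\alpha_1\cdots\alpha_{i-1}(1-\alpha_i)$, and if $d(x,y)=j>1$, $p(x,y)=\sum_{i=j}^nq^{-i}\alpha_1\cdots\alpha_{i-1}(1-\alpha_i)$. A chain is lumpable with respect to a partition if for all parts $L,L'$ the map $x\mapsto\sum_{y\in L'}p(x,y)$ is constant on $L$. *)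

(* Defs.v *)
From mathcomp Require Import all_boot all_order all_algebra.
Set Implicit Arguments. Unset Strict Implicit. Unset Printing Implicit Defensive.
Import Order.TTheory GRing.Theory Num.Theory.

Definition word (q n : nat) := (n.-tuple 'I_q)%type.

Definition lcp (q n : nat) (x y : word q n) : nat :=
  \max_(m < n.+1 | take m x == take m y) m.

Definition dist (q n : nat) (x y : word q n) : nat := n - lcp x y.

Local Open Scope ring_scope.

Definition alpha (q n j : nat) : rat :=
  if (1 <= j <= n.-1)%N then ((q ^ j)%:R - 1) / ((q ^ j.+1)%:R - 1) else 0.

Definition alpha_prod (q n i : nat) : rat := \prod_(1 <= l < i) alpha q n l.

Definition tail_sum (q n j : nat) : rat :=
  \sum_(j <= i < n.+1) (q%:R ^- i) * alpha_prod q n i * (1 - alpha q n i).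

Definition insect_p (q n : nat) (x y : word q n) : rat :=
  if (dist x y <= 1)%N
  then q%:R^-1 * (1 - alpha q n 1) + tail_sum q n 2
  else tail_sum q n (dist x y).

Definition lumpable (q n : nat) (P : {set {set word q n}}) : Prop :=
  forall L L' : {set word q n}, L \in P -> L' \in P ->
  forall x x' : word q n, x \in L -> x' \in L ->
    \sum_(y in L') insect_p x y = \sum_(y in L') insect_p x' y.

(* Main.v *)
Require Import Defs.
From mathcomp Require Import all_boot all_order all_algebra perm zify.
Set Implicit Arguments. Unset Strict Implicit. Unset Printing Implicit Defensive.
Import Order.TTheory GRing.Theory Num.Theory.

Section Dist.
Variables (q n : nat) (hq : (0 < q)%N).
Local Notation T := (word q n).

Definition agree (k : nat) (x y : T) :=
  [forall i : 'I_n, (i < k)%N ==> (tnth x i == tnth y i)].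

Lemma take_agree k (x y : T) : (k <= n)%N ->
  (take k x == take k y) = agree k x y.
Proof.
move=> kn; have a0 : 'I_q := Ordinal hq.
apply/eqP/forallP => [E i|H].
  apply/implyP => ik.
  rewrite (tnth_nth a0) (tnth_nth a0) -(nth_take a0 ik) E nth_take //.
apply: (@eq_from_nth _ a0); first by rewrite !size_take !size_tuple.
move=> i; rewrite size_take size_tuple => hi.
have ik : (i < k)%N by move: hi; case: ifP => //; lia.
have iN : (i < n)%N by lia.
rewrite !nth_take //.
have := H (Ordinal iN); rewrite /= ik /= => /eqP.
by rewrite !(tnth_nth a0).
Qed.

Lemma lcp_le (x y : T) : (lcp x y <= n)%N.
Proof. by apply/bigmax_leqP => i _; rewrite -ltnS. Qed.

Lemma lcp_geP k (x y : T) : (k <= n)%N -> (k <= lcp x y)%N = agree k x y.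
Proof.
move=> kn; rewrite -take_agree //.
case E: (take k x == take k y).
  by apply: (@leq_bigmax_cond _ _ (fun m : 'I_n.+1 => (m : nat)) (Ordinal (kn : (k < n.+1)%N))).
apply/negbTE; rewrite -ltnNge.
case: k kn E => [|k] kn E; first by rewrite !take0 eqxx in E.
rewrite ltnS; apply/bigmax_leqP => i /eqP Ei.
rewrite leqNgt; apply/negP => ki.
by rewrite -(take_takel x ki) -(take_takel y ki) Ei eqxx in E.
Qed.

Lemma dist_leE j (x y : T) : (dist x y <= j)%N = agree (n - j) x y.
Proof.
rewrite -lcp_geP ?leq_subr // /dist.
have := lcp_le x y; lia.
Qed.

Lemma agree_sym k (x y : T) : agree k x y = agree k y x.
Proof. by apply/forallP/forallP => H i; rewrite eq_sym; apply: H. Qed.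

Lemma agree_trans k (x y z : T) : agree k x y -> agree k y z -> agree k x z.
Proof.
move=> /forallP H1 /forallP H2; apply/forallP => i; apply/implyP => ik.
by rewrite (eqP (implyP (H1 i) ik)) (implyP (H2 i) ik).
Qed.

Lemma agree_mono k k' (x y : T) : (k' <= k)%N -> agree k x y -> agree k' x y.
Proof.
move=> kk /forallP H; apply/forallP => i; apply/implyP => ik.
by apply: (implyP (H i)); apply: leq_trans kk.
Qed.

Lemma dist_sym (x y : T) : dist x y = dist y x.
Proof.
apply/eqP; rewrite eqn_leq dist_leE agree_sym -dist_leE leqnn /=.
by rewrite dist_leE agree_sym -dist_leE.
Qed.

Lemma dist_ultra i k (x y z : T) : (dist x y <= i)%N -> (dist y z <= k)%N ->
  (dist x z <= maxn i k)%N.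
Proof.
rewrite !dist_leE => H1 H2; apply: (agree_trans (y := y)).
  by apply: agree_mono H1; lia.
by apply: agree_mono H2; lia.
Qed.

Lemma dist_le0 (x y : T) : (dist x y <= 0)%N = (x == y).
Proof.
rewrite dist_leE subn0; apply/forallP/eqP => [H|->]; last by move=> i; rewrite eqxx implybT.
by apply: eq_from_tnth => i; have := H i; rewrite ltn_ord => /eqP.
Qed.

Lemma dist_big j (x y : T) : (n <= j)%N -> (dist x y <= j)%N.
Proof. by move=> nj; rewrite /dist; lia. Qed.

End Dist.

Section Ball.
Variables (q n : nat) (hq : (0 < q)%N).
Local Notation T := (word q n).

Definition ball (x : T) j := [set y : T | (dist x y <= j)%N].

Definition swp (x x' y : T) : T :=
  [tuple tperm (tnth x i) (tnth x' i) (tnth y i) | i < n].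

Lemma swp_inj (x x' : T) : injective (swp x x').
Proof.
move=> y z E; apply: eq_from_tnth => i.
have := congr1 (fun t => tnth t i) E; rewrite /swp !tnth_mktuple.
exact: perm_inj.
Qed.

Lemma card_ball_le (x x' : T) j : (#|ball x j| <= #|ball x' j|)%N.
Proof.
rewrite -(card_imset _ (@swp_inj x x')).
apply: subset_leq_card; apply/subsetP => z /imsetP [y].
rewrite !inE !dist_leE // => /forallP H ->.
apply/forallP => i; apply/implyP => ik.
by rewrite /swp tnth_mktuple -(eqP (implyP (H i) ik)) tpermL.
Qed.

Lemma card_ball (x x' : T) j : #|ball x j| = #|ball x' j|.
Proof. by apply/eqP; rewrite eqn_leq !card_ball_le. Qed.

End Ball.

Local Open Scope ring_scope.

Section Kern.
Variables (q n : nat) (hq : (0 < q)%N) (c : word q n).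
Local Notation T := (word q n).

Definition Bk j (x y : T) : rat := ((dist x y <= j)%N)%:R.

Lemma sum_bool (P : pred T) : \sum_y (P y)%:R = (#|P|)%:R :> rat.
Proof.
rewrite -sum1_card natr_sum [RHS]big_mkcond /=.
by apply: eq_bigr => y _; rewrite unfold_in; case: (P y).
Qed.

Lemma natbM (a b : bool) : (a%:R * b%:R : rat) = (a && b)%:R.
Proof. by case: a; case: b; rewrite ?mulr0 ?mulr1. Qed.

Lemma Bk_comp i k (x z : T) :
  \sum_y Bk i x y * Bk k y z = (#|ball c (minn i k)|)%:R * Bk (maxn i k) x z.
Proof.
rewrite /Bk.
under eq_bigr => y _ do rewrite natbM.
rewrite (sum_bool (fun y => (dist x y <= i)%N && (dist y z <= k)%N)) -natrM.
congr (_ %:R).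
case: (leqP i k) => ik.
  case: (leqP (dist x z) k) => hxz /=; rewrite ?muln1 ?muln0.
    rewrite (card_ball hq c x); apply: eq_card => y.
    rewrite /ball inE -[y \in _]topredE /=.
    case h: (dist x y <= i)%N => //=.
    have h' : (dist y x <= k)%N by rewrite (dist_sym hq y x); exact: leq_trans h ik.
    by have := dist_ultra hq h' hxz; rewrite maxnn.
  apply/eq_card0 => y; rewrite -topredE /=.
  apply/negP => /andP [h1 h2].
  have := dist_ultra hq h1 h2; have -> : maxn i k = k by lia.
  by rewrite leqNgt hxz.
case: (leqP (dist x z) i) => hxz /=; rewrite ?muln1 ?muln0.
  rewrite (card_ball hq c z); apply: eq_card => y.
  rewrite /ball inE -[y \in _]topredE /=.
  rewrite (dist_sym hq z y).
  case h: (dist y z <= k)%N; rewrite ?andbF ?andbT //.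
  have h' : (dist z y <= i)%N by rewrite (dist_sym hq z y); exact: leq_trans h (ltnW ik).
  by have := dist_ultra hq hxz h'; rewrite maxnn.
apply/eq_card0 => y; rewrite -topredE /=.
apply/negP => /andP [h1 h2].
have := dist_ultra hq h1 h2; have -> : maxn i k = i by lia.
by rewrite leqNgt hxz.
Qed.
End Kern.

Section Ops.
Variables (q n : nat) (hq : (0 < q)%N).
Local Notation T := (word q n).
Local Notation V := {ffun T -> rat^o}.

Lemma scaleRE (a b : rat) : a *: (b : rat^o) = a * b.
Proof. by []. Qed.


Definition op (K : T -> T -> rat) (f : V) : V := [ffun x => (\sum_y K x y * f y : rat)].

Lemma op_sum K I (r : seq I) (Pr : pred I) (F : I -> V) :
  op K (\sum_(i <- r | Pr i) F i) = \sum_(i <- r | Pr i) op K (F i).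
Proof.
apply/ffunP => x; rewrite !ffunE sum_ffunE.
under eq_bigr => y _ do rewrite sum_ffunE big_distrr /=.
rewrite exchange_big /=; apply: eq_bigr => i _; by rewrite ffunE.
Qed.

Lemma opZ K (a : rat) (f : V) : op K (a *: f) = a *: op K f.
Proof.
apply/ffunP => x; rewrite !ffunE scaleRE big_distrr /=; apply: eq_bigr => y _.
by rewrite ffunE scaleRE mulrCA.
Qed.

Lemma opD K (f g : V) : op K (f + g) = op K f + op K g.
Proof.
apply/ffunP => x; rewrite !ffunE -big_split /=; apply: eq_bigr => y _.
by rewrite ffunE mulrDr.
Qed.

Lemma opN K (f : V) : op K (- f) = - op K f.
Proof. by rewrite -scaleN1r opZ scaleN1r. Qed.

Lemma opB K (f g : V) : op K (f - g) = op K f - op K g.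
Proof. by rewrite opD opN. Qed.

Lemma op0 (K : T -> T -> rat) : op K 0 = 0.
Proof. by apply/ffunP => x; rewrite !ffunE big1 // => y _; rewrite ffunE mulr0. Qed.

Lemma op_comp K1 K2 (f : V) :
  op K1 (op K2 f) = op (fun x z => \sum_y K1 x y * K2 y z) f.
Proof.
apply/ffunP => x; rewrite !ffunE.
under eq_bigr => y _ do rewrite ffunE big_distrr /=.
rewrite exchange_big /=; apply: eq_bigr => z _.
by rewrite big_distrl /=; apply: eq_bigr => y _; rewrite mulrA.
Qed.

Lemma op_ext K1 K2 (f : V) : (forall x y, K1 x y = K2 x y) -> op K1 f = op K2 f.
Proof. by move=> H; apply/ffunP => x; rewrite !ffunE; apply: eq_bigr => y _; rewrite H. Qed.

Lemma op_sumK I (r : seq I) (Pr : pred I) (F : I -> T -> T -> rat) (a : I -> rat) (f : V) :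
  op (fun x y => \sum_(i <- r | Pr i) a i * F i x y) f = \sum_(i <- r | Pr i) a i *: op (F i) f.
Proof.
apply/ffunP => x; rewrite !ffunE sum_ffunE.
under eq_bigr => y _ do rewrite big_distrl /=.
rewrite exchange_big /=; apply: eq_bigr => i _; rewrite !ffunE scaleRE big_distrr /=.
by apply: eq_bigr => y _; rewrite mulrA.
Qed.

End Ops.

Section Mops.
Variables (q n : nat) (hq : (0 < q)%N) (c : word q n).
Local Notation T := (word q n).
Local Notation V := {ffun T -> rat^o}.

Definition bb j : rat := (#|ball c j|)%:R.

Lemma bb_gt0 j : 0 < bb j.
Proof.
rewrite /bb ltr0n card_gt0; apply/set0Pn; exists c.
by rewrite inE (leq_trans _ (leq0n j)) // dist_le0 //.
Qed.

Lemma bb_neq0 j : bb j != 0.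
Proof. by rewrite gt_eqF ?bb_gt0. Qed.

Definition M j (f : V) : V := (bb j)^-1 *: op (Bk j) f.
Definition M' j (f : V) : V := if (j <= n)%N then M j f else 0.

Lemma opKZ (K : T -> T -> rat) (a : rat) (f : V) :
  op (fun x y => a * K x y) f = a *: op K f.
Proof.
apply/ffunP => x; rewrite !ffunE scaleRE big_distrr /=.
by apply: eq_bigr => y _; rewrite mulrA.
Qed.

Lemma M_comp i k f : M i (M k f) = M (maxn i k) f.
Proof.
rewrite /M opZ op_comp.
rewrite (op_ext _ (fun x z => Bk_comp hq c i k x z)) opKZ !scalerA.
congr (_ *: _).
have := bb_neq0 i; have := bb_neq0 k.
case: (leqP i k) => ik.
  by move=> h1 h2; rewrite -/(bb i) mulrCA mulVf // mulr1.
by move=> h1 h2; rewrite -/(bb k) mulVf // mulr1.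
Qed.

Lemma M0 f : M 0 f = f.
Proof.
rewrite /M.
have -> : bb 0 = 1.
  rewrite /bb (_ : ball c 0 = [set c]) ?cards1 //.
  by apply/setP => y; rewrite !inE dist_le0 // eq_sym.
rewrite invr1 scale1r; apply/ffunP => x; rewrite ffunE (bigD1 x) //= big1 ?addr0.
  by rewrite /Bk (leq_trans _ (leq0n 0)) ?dist_le0 // mul1r.
by move=> y yx; rewrite /Bk dist_le0 // eq_sym (negbTE yx) mul0r.
Qed.

Lemma M_zero j : M j 0 = 0.
Proof. by rewrite /M op0 scaler0. Qed.

Lemma M'_comp i k f : M' i (M' k f) = M' (maxn i k) f.
Proof.
rewrite /M'; case: (leqP i n) => iN; case: (leqP k n) => kN.
- by rewrite M_comp geq_max iN kN.
- by rewrite M_zero (ltn_geF (leq_trans kN (leq_maxr _ _))).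
- by rewrite (ltn_geF (leq_trans iN (leq_maxl _ _))).
- by rewrite (ltn_geF (leq_trans iN (leq_maxl _ _))).
Qed.

Lemma M'0 f : M' 0 f = f.
Proof. by rewrite /M' leq0n M0. Qed.

Lemma M'_big j f : (n < j)%N -> M' j f = 0.
Proof. by rewrite /M' => /ltn_geF ->. Qed.

End Mops.

Section Eig.
Variables (q n : nat) (hq : (0 < q)%N) (hn : (1 <= n)%N) (c : word q n).
Local Notation T := (word q n).
Local Notation V := {ffun T -> rat^o}.

Definition coef i : rat := q%:R ^- i * alpha_prod q n i * (1 - alpha q n i).

Lemma dist_leN (x y : T) : (dist x y <= n)%N.
Proof. exact: leq_subr. Qed.

Lemma insect_pE (x y : T) : insect_p x y = \sum_(1 <= i < n.+1) coef i * Bk i x y.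
Proof.
rewrite /insect_p; case: ifP => hd.
  rewrite (@eq_big_nat _ _ _ 1 n.+1 _ coef); last first.
    move=> i /andP [h1 _]; rewrite /Bk (leq_trans hd h1) mulr1 //.
  rewrite big_ltn ?ltnS //; congr (_ + _).
  by rewrite /coef /alpha_prod big_geq // mulr1.
have d2 : (1 < dist x y)%N by rewrite ltnNge hd.
rewrite (@big_cat_nat _ _ _ (dist x y)) /=; [|exact: ltnW|exact: leqW (dist_leN _ _)].
rewrite big_nat_cond big1 ?add0r; last first.
  move=> i /andP [/andP [_ hi] _]; by rewrite /Bk leqNgt hi mulr0.
rewrite /tail_sum; apply: eq_big_nat => i /andP [h1 _].
by rewrite /Bk h1 mulr1.
Qed.

Definition w i : rat := coef i * bb c i.
Definition Pop (f : V) : V := op (fun x y => insect_p x y) f.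

Lemma Pop_dec f : Pop f = \sum_(1 <= i < n.+1) w i *: M' c i f.
Proof.
rewrite /Pop (op_ext _ insect_pE) op_sumK.
apply: eq_big_nat => i /andP [_ iN]; rewrite /M' -ltnS iN /M scalerA /w.
by rewrite mulfK ?bb_neq0.
Qed.

Definition E k (f : V) : V := M' c k f - M' c k.+1 f.
Definition s k : rat := \sum_(1 <= i < n.+1) (if (i <= k)%N then w i else 0).

Lemma Pop_E k f : Pop (E k f) = s k *: E k f.
Proof.
rewrite /E /Pop opB -!/(Pop _) !Pop_dec -sumrB /s scaler_suml.
apply: eq_big_nat => i /andP [_ iN].
rewrite !(M'_comp hq); case: ifP => ik.
  by rewrite (maxn_idPr ik) (maxn_idPr (leqW ik)) scalerBr.
rewrite scale0r; have ik' : (k < i)%N by rewrite ltnNge ik.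
by rewrite (maxn_idPl (ltnW ik')) (maxn_idPl ik') subrr.
Qed.

End Eig.

Section Pos.
Variables (q n : nat) (hq2 : (2 <= q)%N) (hn : (1 <= n)%N) (c : word q n).
Local Notation T := (word q n).

Lemma qpow_gt1 l : (1 <= l)%N -> 0 < (q ^ l)%:R - 1 :> rat.
Proof.
move=> hl; rewrite subr_gt0 ltr1n.
by apply: leq_trans hq2 _; rewrite -{1}(expn1 q) leq_pexp2l // ltnW.
Qed.

Lemma alpha_lt1 l : alpha q n l < 1.
Proof.
rewrite /alpha; case: ifP => // /andP [h1 _].
rewrite ltr_pdivrMr ?qpow_gt1 // mul1r ltrD2r ltr_nat ltn_exp2l //.
Qed.

Lemma alpha_gt0 l : (1 <= l)%N -> (l <= n.-1)%N -> 0 < alpha q n l.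
Proof.
move=> h1 h2; rewrite /alpha h1 h2 /=.
by rewrite divr_gt0 ?qpow_gt1.
Qed.

Lemma coef_gt0 i : (1 <= i <= n)%N -> 0 < coef q n i.
Proof.
move=> /andP [h1 h2]; rewrite /coef !mulr_gt0 //.
- by rewrite invr_gt0 exprn_gt0 // ltr0n; apply: leq_trans hq2.
- rewrite /alpha_prod big_nat_cond; apply: prodr_gt0 => l /andP [/andP [l1 l2] _].
  by apply: alpha_gt0 => //; lia.
- by rewrite subr_gt0 alpha_lt1.
Qed.

Lemma w_gt0 i : (1 <= i <= n)%N -> 0 < w c i.
Proof. by move=> h; rewrite /w mulr_gt0 ?coef_gt0 // bb_gt0 //; apply: leq_trans hq2. Qed.

Lemma sE k : (k <= n)%N -> s c k = \sum_(1 <= i < k.+1) w c i.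
Proof.
move=> kn; rewrite /s (@big_cat_nat _ _ _ k.+1) //= ?ltnS //.
rewrite [X in _ + X]big_nat_cond [X in _ + X]big1 ?addr0; last first.
  by move=> i /andP [/andP [h _] _]; rewrite leqNgt h.
by apply: eq_big_nat => i /andP [_ h]; rewrite -ltnS h.
Qed.

Lemma s_lt l m : (l < m)%N -> (m <= n)%N -> s c l < s c m.
Proof.
move=> lm mn; rewrite !sE //; last by apply: leq_trans (ltnW lm) mn.
rewrite (@big_cat_nat _ _ _ l.+1 1 m.+1) //= ?ltnS ?(ltnW lm) //.
rewrite ltrDl big_ltn //= ltr_pwDl //.
  by rewrite w_gt0 //; apply/andP; split; lia.
rewrite big_nat_cond sumr_ge0 // => i /andP [/andP [h1 h2] _]; rewrite ltW // w_gt0 //.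
by apply/andP; split; lia.
Qed.

Lemma s_inj l m : (l <= n)%N -> (m <= n)%N -> l != m -> s c l - s c m != 0.
Proof.
move=> ln mn; rewrite subr_eq0 neq_ltn => /orP [h|h].
  by rewrite lt_eqF // s_lt.
by rewrite gt_eqF // s_lt.
Qed.

End Pos.

Section Lag.
Variables (q n : nat) (hq2 : (2 <= q)%N) (hn : (1 <= n)%N) (c : word q n)
  (P : {set {set word q n}}) (hP : partition P [set: word q n]) (hlump : lumpable P).
Local Notation T := (word q n).
Local Notation V := {ffun T -> rat^o}.

Lemma hq : (0 < q)%N. Proof. exact: leq_trans hq2. Qed.

Definition Wf (f : V) := forall L, L \in P -> forall x x', x \in L -> x' \in L -> f x = f x'.

Lemma W0 : Wf 0.
Proof. by move=> L _ x x' _ _; rewrite !ffunE. Qed.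

Lemma WD f g : Wf f -> Wf g -> Wf (f + g).
Proof. by move=> hf hg L hL x x' hx hx'; rewrite !ffunE (hf L hL x x') ?(hg L hL x x'). Qed.

Lemma WZ a f : Wf f -> Wf (a *: f).
Proof. by move=> hf L hL x x' hx hx'; rewrite !ffunE (hf L hL x x'). Qed.

Lemma WB f g : Wf f -> Wf g -> Wf (f - g).
Proof. by move=> hf hg; apply: WD => //; rewrite -scaleN1r; apply: WZ. Qed.

Lemma Wsum I (r : seq I) (Pr : pred I) (F : I -> V) :
  (forall i, Pr i -> Wf (F i)) -> Wf (\sum_(i <- r | Pr i) F i).
Proof.
move=> H; elim/big_rec: _ => [|i g hi hg]; first exact: W0.
by apply: WD => //; apply: H.
Qed.

Lemma Pop_W f : Wf f -> Wf (Pop f).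
Proof.
move=> hf L hL x x' hx hx'.
have hcov := cover_partition hP; have htriv := partition_trivIset hP.
have split_sum : forall z : T, Pop f z = \sum_(L' in P) \sum_(y in L') insect_p z y * f y.
  move=> z; rewrite ffunE -(big_trivIset _ htriv) hcov.
  by apply: eq_bigl => y; rewrite in_setT.
rewrite !split_sum; apply: eq_bigr => L' hL'.
case: (set_0Vmem L') => [->|[z hz]]; first by rewrite !big_set0.
have H : forall u : T, \sum_(y in L') insect_p u y * f y = (\sum_(y in L') insect_p u y) * f z.
  by move=> u; rewrite big_distrl /=; apply: eq_bigr => y hy; rewrite (hf L' hL' y z).
by rewrite !H (hlump hL hL' hx hx').
Qed.

Definition it (ls : seq nat) (f : V) : V := foldr (fun l g => Pop g - s c l *: g) f ls.

Lemma it_W ls f : Wf f -> Wf (it ls f).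
Proof.
move=> hf; elim: ls => //= l ls IH.
by apply: WB; [apply: Pop_W|apply: WZ].
Qed.

Lemma it_E ls m f : it ls (E c m f) = (\prod_(l <- ls) (s c m - s c l)) *: E c m f.
Proof.
elim: ls => [|l ls IH] /=; first by rewrite big_nil scale1r.
rewrite IH /Pop opZ -/(Pop _) (Pop_E hq hn) big_cons !scalerA -scalerBl.
by congr (_ *: _); rewrite mulrBl mulrC.
Qed.

Lemma it_sum ls (F : 'I_n.+1 -> V) : it ls (\sum_m F m) = \sum_m it ls (F m).
Proof.
elim: ls => [|l ls IH] //=.
rewrite IH /Pop op_sum -/(Pop _) scaler_sumr -sumrB.
by apply: eq_bigr => m _; rewrite /Pop.
Qed.

Lemma E_sum f : \sum_(m < n.+1) E c m f = f.
Proof.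
rewrite -(big_mkord xpredT (fun m => E c m f)).
have -> : \sum_(0 <= m < n.+1) E c m f = - \sum_(0 <= m < n.+1) (M' c m.+1 f - M' c m f).
  by rewrite -sumrN; apply: eq_bigr => m _; rewrite opprB.
by rewrite telescope_sumr // M'_big // (M'0 hq) sub0r opprK.
Qed.

Lemma E_W k f : (k <= n)%N -> Wf f -> Wf (E c k f).
Proof.
move=> kn hf.
set ls := [seq l <- iota 0 n.+1 | l != k].
have hit := it_W ls hf.
rewrite -(E_sum f) it_sum in hit.
rewrite (eq_bigr _ (fun (m : 'I_n.+1) _ => it_E ls m f)) in hit.
rewrite (bigD1 (Ordinal (kn : (k < n.+1)%N))) //= [X in _ + X]big1 ?addr0 in hit; last first.
  move=> m hm.
  have mls : (m : nat) \in ls.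
    rewrite mem_filter mem_iota add0n ltn_ord andbT.
    rewrite leq0n andbT; apply: contra hm => /eqP e; by apply/eqP/val_inj.
  by rewrite (big_rem _ mls) subrr /= mul0r scale0r.
have cnz : \prod_(l <- ls) (s c k - s c l) != 0.
  rewrite prodf_seq_neq0; apply/allP => l; rewrite mem_filter mem_iota /= add0n ltnS => /andP [lk ln].
  by apply: s_inj => //; rewrite eq_sym.
have := WZ (\prod_(l <- ls) (s c k - s c l))^-1 hit.
by rewrite scalerA mulVf // scale1r.
Qed.

Lemma M'_W j f : Wf f -> Wf (M' c j f).
Proof.
move=> hf; case: (leqP j n) => jn; last by rewrite M'_big //; apply: W0.
have -> : M' c j f = \sum_(j <= k < n.+1) E c k f.
  rewrite -[LHS]opprK -[RHS]opprK -sumrN; congr (- _).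
  have -> : - M' c j f = M' c n.+1 f - M' c j f by rewrite (@M'_big _ _ c n.+1) // sub0r.
  rewrite -(@telescope_sumr _ j n.+1 (fun m => M' c m f)); last by apply: leqW.
  by apply: eq_bigr => m _; rewrite opprB.
rewrite big_nat_cond; apply: Wsum => m /andP [/andP [_ h] _]; apply: E_W => //.
Qed.

Lemma opB_W j f : (j <= n)%N -> Wf f -> Wf (op (Bk j) f).
Proof.
move=> jn hf; have := WZ (bb c j) (M'_W j hf).
by rewrite /M' jn /M scalerA mulfV ?bb_neq0 ?hq // scale1r.
Qed.

End Lag.

Local Close Scope ring_scope.

Lemma card_eqS (q n : nat) (Ls : {set word q n}) x i :
  #|[set y in Ls | dist x y == i.+1]| =
  (#|[set y in Ls | dist x y <= i.+1]| - #|[set y in Ls | dist x y <= i]|)%N.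
Proof.
have sub : [set y in Ls | dist x y <= i] \subset [set y in Ls | dist x y <= i.+1].
  by apply/subsetP => y; rewrite !inE => /andP [-> h] /=; apply: leqW.
rewrite -(setIidPr sub) -cardsD; apply: eq_card => y; rewrite !inE.
by case: (y \in Ls) => //=; rewrite eqn_leq -ltnNge andbC.
Qed.

Lemma card_eq0 (q n : nat) (Ls : {set word q n}) x :
  #|[set y in Ls | dist x y == 0]| = #|[set y in Ls | dist x y <= 0]|.
Proof. by apply: eq_card => y; rewrite !inE leqn0. Qed.



Local Open Scope ring_scope.
Lemma cnt_op (q n : nat) (Ls : {set word q n}) x j :
  (#|[set y in Ls | dist x y <= j]|%N)%:R =
  op (Bk j) [ffun y => (((y \in Ls) : nat)%:R : rat^o)] x.
Proof.
rewrite ffunE.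
under eq_bigr => y _ do rewrite ffunE /Bk natbM.
rewrite (sum_bool (fun y => (dist x y <= j)%N && (y \in Ls))).
by congr (_ %:R); apply: eq_card => y; rewrite !inE andbC.
Qed.


Local Close Scope ring_scope.

Theorem theorem12 (q n : nat) (hq : (2 <= q)%N) (hn : (1 <= n)%N)
  (P : {set {set word q n}})
  (hP : partition P [set: word q n])
  (hlump : lumpable P)
  (Lr : {set word q n}) (hLr : Lr \in P)
  (x0 y0 : word q n) (hx0 : x0 \in Lr) (hy0 : y0 \in Lr) :
  forall (i : nat), (i <= n)%N ->
  forall Ls : {set word q n}, Ls \in P ->
    #|[set x in Ls | dist x0 x == i]| = #|[set y in Ls | dist y0 y == i]|.
Proof.
Local Open Scope ring_scope.
move=> i iN Ls hLs.
set ind : {ffun word q n -> rat^o} := [ffun y => (((y \in Ls) : nat)%:R : rat^o)].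
have indW : Wf P ind.
  move=> L hL x x' hx hx'; rewrite !ffunE.
  have htriv := partition_trivIset hP.
  have key : forall u u', u \in L -> u' \in L -> u \in Ls -> u' \in Ls.
    move=> u u' hu hu' huL.
    have e1 := def_pblock htriv hL hu; have e2 := def_pblock htriv hLs huL.
    by rewrite -e2 e1.
  case h1: (x \in Ls); case h2: (x' \in Ls) => //.
  - by rewrite (key x x') in h2.
  - by rewrite (key x' x) in h1.
have cnt : forall j, (j <= n)%N ->
    #|[set y in Ls | (dist x0 y <= j)%N]| = #|[set y in Ls | (dist y0 y <= j)%N]|.
  move=> j jn; apply/eqP; rewrite -(eqr_nat rat) !cnt_op; apply/eqP.
  exact: (opB_W hq hn x0 hP hlump jn indW hLr hx0 hy0).
case: i iN => [|i] iN; first by rewrite !card_eq0 cnt.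
by rewrite !card_eqS !cnt // ltnW.
Qed.
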